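(* Let $p$ be a prime, and let $f:V_m\to\mathbb{F}_p$ be a dual-bent function and $g:V_n\to\mathbb{F}_p$ a non-dual-bent function, where $V_m,V_n$ are $\mathbb{F}_p$-vector spaces of dimensions $m,n$ with nondegenerate inner products. Then the direct sum $F:V_m\times V_n\to\mathbb{F}_p$, $F(x,y)=f(x)+g(y)$, is a non-dual-bent function.
   Context: Walsh transform of $f:V\to\mathbb{F}_p$ ($\dim V=N$): $\widehat f(b)=\sum_{x\in V}\epsilon_p^{f(x)-\langle b,x\rangle}$, $\epsilon_p=e^{2\pi i/p}$; on $V_m\times V_n$ use $\langle(a,b),(x,y)\rangle=\langle a,x\rangle+\langle b,y\rangle$. $f$ is bent if $|\widehat f(b)|=p^{N/2}$ for all $b$; then $\widehat f(b)=\zeta_bp^{N/2}\epsilon_p^{f^*(b)}$ for some $\zeta_b\in\{\pm1,\pm i\}$ (for $p=2$, $\zeta_b=1$ and $\epsilon_2^{f^*(b)}=(-1)^{f^*(b)}$), defining the dual $f^*$. A bent function is dual-bent if its dual is bent, and non-dual-bent if it is bent but its dual is not bent. *)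

(* Defs.v *)
From HB Require Import structures.
From mathcomp Require Import all_boot all_order all_algebra all_field.
Unset Printing Implicit Defensive.
Import Order.TTheory GRing.Theory Num.Theory.
Local Open Scope ring_scope.

(* epsilon_p = e^{2 pi i / p}: p.-root (-1) is the p-th root of -1 with
   minimal nonnegative argument, i.e. e^{i pi / p}; its square is e^{2 pi i/p}. *)
Definition epsp (p : nat) : algC := (p.-root (-1)) ^+ 2.

Definition walsh {p : nat} {V : finType} (ip : V -> V -> 'F_p)
  (f : V -> 'F_p) (b : V) : algC :=
  \sum_(x : V) epsp p ^+ (val (f x - ip b x)).

Definition bent (p N : nat) {V : finType} (ip : V -> V -> 'F_p) (f : V -> 'F_p) : Prop :=
  forall b : V, `|walsh ip f b| = sqrtC ((p ^ N)%:R).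

Definition zeta_ok (p : nat) (z : algC) : Prop :=
  if p == 2%N then z = 1 else (z = 1 \/ z = -1 \/ z = 'i \/ z = - 'i).

Definition is_dual (p N : nat) {V : finType} (ip : V -> V -> 'F_p)
  (f fs : V -> 'F_p) : Prop :=
  forall b : V, exists z : algC, zeta_ok p z /\
    walsh ip f b = z * sqrtC ((p ^ N)%:R) * epsp p ^+ (val (fs b)).

Definition dual_bent (p N : nat) {V : finType} (ip : V -> V -> 'F_p) (f : V -> 'F_p) : Prop :=
  bent p N ip f /\ exists fs, is_dual p N ip f fs /\ bent p N ip fs.

Definition non_dual_bent (p N : nat) {V : finType} (ip : V -> V -> 'F_p) (f : V -> 'F_p) : Prop :=
  bent p N ip f /\ exists fs, is_dual p N ip f fs /\ ~ bent p N ip fs.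

Definition ipM {p m : nat} (M : 'M['F_p]_m) (b x : 'rV['F_p]_m) : 'F_p :=
  (b *m M *m x^T) 0 0.

Definition ipP {p : nat} {V W : finType} (ip1 : V -> V -> 'F_p) (ip2 : W -> W -> 'F_p)
  (u v : V * W) : 'F_p := ip1 u.1 v.1 + ip2 u.2 v.2.

(* Main.v *)
Require Import Defs.
From HB Require Import structures.
From mathcomp Require Import all_boot all_order all_algebra all_field.
From mathcomp Require Import ring.
Import Order.TTheory GRing.Theory Num.Theory.
Local Open Scope ring_scope.

Lemma epsp_p (p : nat) : (0 < p)%N -> epsp p ^+ p = 1.
Proof.
move=> hp; rewrite /epsp -exprM mulnC exprM rootCK //.
by rewrite -signr_odd /= expr0.
Qed.

Lemma eps_add (p : nat) (hp : prime p) (a b : 'F_p) :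
  epsp p ^+ val (a + b) = epsp p ^+ val a * epsp p ^+ val b.
Proof.
rewrite -exprD /=.
have e := Fp_cast hp.
have h1 : epsp p ^+ (Zp_trunc (pdiv p)).+2 = 1.
  by rewrite e; apply: epsp_p; exact: prime_gt0.
by rewrite expr_mod.
Qed.

Lemma walsh_sum (p : nat) (hp : prime p) (V W : finType)
  (ip1 : V -> V -> 'F_p) (ip2 : W -> W -> 'F_p) (f : V -> 'F_p) (g : W -> 'F_p) (u : V * W) :
  walsh (ipP ip1 ip2) (fun z => f z.1 + g z.2) u = walsh ip1 f u.1 * walsh ip2 g u.2.
Proof.
rewrite /walsh big_distrlr pair_bigA; apply: eq_bigr => -[x y] _.
rewrite [RHS](@esym _ _ _ (eps_add p hp _ _)); congr (_ ^+ val _).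
by rewrite /ipP /= opprD addrACA.
Qed.

Lemma sqrt_pow (p a b : nat) :
  sqrtC ((p ^ (a + b))%:R) = sqrtC ((p ^ a)%:R) * sqrtC ((p ^ b)%:R) :> algC.
Proof. by rewrite expnD natrM sqrtCM // qualifE /= ler0n. Qed.

Theorem theorem2 (p m n : nat) (hp : prime p)
  (M1 : 'M['F_p]_m) (M2 : 'M['F_p]_n)
  (hM1s : M1^T = M1) (hM1u : M1 \in unitmx)
  (hM2s : M2^T = M2) (hM2u : M2 \in unitmx)
  (f : 'rV['F_p]_m -> 'F_p) (g : 'rV['F_p]_n -> 'F_p) :
  dual_bent p m (ipM M1) f ->
  non_dual_bent p n (ipM M2) g ->
  non_dual_bent p (m + n) (ipP (ipM M1) (ipM M2)) (fun z => f z.1 + g z.2).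
Proof.
move=> [bf [fs [dfs bfs]]] [bg [gs [dgs nbgs]]].
split.
  by move=> u; rewrite walsh_sum // normrM bf bg sqrt_pow.
exists (fun z => fs z.1 + gs z.2); split.
  move=> u; have [z1 [hz1 e1]] := dfs u.1; have [z2 [hz2 e2]] := dgs u.2.
  exists (z1 * z2); split.
    move: hz1 hz2; rewrite /zeta_ok; case: (p == 2%N).
      by move=> -> ->; rewrite mulr1.
    have hi : 'i * 'i = -1 :> algC by rewrite -expr2 sqrCi.
    move=> [->|[->|[->|->]]] [->|[->|[->|->]]];
      rewrite ?mulr1 ?mul1r ?mulrN ?mulNr ?mulr1 ?opprK ?hi ?opprK ?mul1r ?mulr1 ?opprK;
      try (by left); try (by right; left); try (by right; right; left); try (by right; right; right).
  rewrite walsh_sum // e1 e2 eps_add // sqrt_pow.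
  ring.
move=> bFs; apply: nbgs => b.
have := bFs (0, b); rewrite walsh_sum // normrM bfs /= sqrt_pow.
move/mulfI; apply.
by rewrite sqrtC_eq0 pnatr_eq0 expn_eq0 negb_and -lt0n prime_gt0.
Qed.
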